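(* Let $k$, $n$, and $d$ be positive integers with $n\geq 2d$, $\gcd(n,d)=1$, and $\frac{n}{d}<k$. If $G$ is a finite, simple, undirected, connected graph with $\chi(G)=k$ and $\chi_c(G)=\frac{n}{d}$, then $G$ has a $k$-coloring $f$ such that (1) for at least $\left(\frac{\chi(G)(\chi_c(G)+1-\chi(G))}{\chi_c(G)}\right)|V(G)|$ vertices $u$ of $G$, some full $f$-rainbow path begins at $u$, and (2) for each of the remaining vertices $v$ of $G$, some $f$-rainbow path of order $k-1$ begins at $v$.
   Context: For a positive integer $k$, $[k]=\{1,\dots,k\}$. A $k$-coloring of $G$ is a function $f:V(G)\to[k]$ with $f(u)\neq f(v)$ for every two adjacent vertices $u,v$; $\chi(G)$ is the minimum $k$ for which a $k$-coloring exists. For positive integers $n,d$ with $n\ge 2d$ and $\gcd(n,d)=1$, an $(n,d)$-coloring of $G$ is a function $c:V(G)\to[n]$ with $d\le |c(u)-c(v)|\le n-d$ for every two adjacent vertices $u,v$. The circular chromatic number $\chi_c(G)$ is the infimum (in fact a minimum) of $n/d$ over all $(n,d)$-colorings of $G$. For a $k$-coloring $f$, an $f$-rainbow path is a path in $G$ whose vertices have pairwise distinct colors under $f$; it is full if it has order (number of vertices) $k$. A path begins at $u$ if $u$ is one of its end vertices. *)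

(* Defs.v *)
From mathcomp Require Import all_boot all_order all_algebra.
Set Implicit Arguments. Unset Strict Implicit. Unset Printing Implicit Defensive.

Definition simple_graph (T : finType) (e : rel T) : Prop :=
  symmetric e /\ irreflexive e.

Definition connected_graph (T : finType) (e : rel T) : Prop :=
  forall x y : T, connect e x y.

Definition is_coloring (T : finType) (e : rel T) (k : nat) (f : T -> nat) : Prop :=
  (forall v, 1 <= f v <= k) /\ (forall u v, e u v -> f u != f v).

Definition chromatic_number (T : finType) (e : rel T) (k : nat) : Prop :=
  (exists f, is_coloring e k f) /\
  (forall j (f : T -> nat), is_coloring e j f -> k <= j).

Definition natdist (a b : nat) : nat := maxn (a - b) (b - a).

Definition is_circ_coloring (T : finType) (e : rel T) (n d : nat) (c : T -> nat) : Prop :=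
  [/\ 0 < d, 2 * d <= n, coprime n d,
      (forall v, 1 <= c v <= n) &
      (forall u v, e u v -> d <= natdist (c u) (c v) <= n - d)].

Definition circ_chromatic_number (T : finType) (e : rel T) (q : rat) : Prop :=
  (exists n d c, is_circ_coloring e n d c /\ q = (n%:Q / d%:Q)%R) /\
  (forall n d c, is_circ_coloring e n d c -> (q <= n%:Q / d%:Q)%R).

Definition is_graph_path (T : finType) (e : rel T) (p : seq T) : Prop :=
  match p with
  | [::] => False
  | x :: s => path e x s /\ uniq p
  end.

Definition rainbow_path (T : finType) (e : rel T) (f : T -> nat) (p : seq T) : Prop :=
  is_graph_path e p /\ uniq (map f p).

Definition begins_at (T : finType) (u : T) (p : seq T) : Prop :=
  match p with
  | [::] => False
  | x :: s => u = x \/ u = last x s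
  end.

(* Main.v *)
Require Import Defs.
From mathcomp Require Import all_boot all_order all_algebra zify ring.
From Stdlib Require Import ClassicalEpsilon Classical.
Import GRing.Theory Num.Theory.
Set Implicit Arguments. Unset Strict Implicit.

Lemma modE a n : a < 2 * n -> a %% n = if a < n then a else a - n.
Proof.
move=> h; case: ifP => h2; first by rewrite modn_small.
have -> : a = (a - n) + n by lia.
by rewrite modnDr modn_small; lia.
Qed.

Definition fdist (n a b : nat) := (b + n - a) %% n.

Lemma fdE n a b : a < n -> b < n -> fdist n a b = if a <= b then b - a else b + n - a.
Proof.
move=> ha hb; rewrite /fdist modE; last by lia.
repeat case: ifP => ?; lia.
Qed.

Lemma natdist_fd n d a b : 0 < d -> a < n -> b < n ->
  (d <= natdist a b <= n - d) = (d <= fdist n a b <= n - d).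
Proof.
move=> hd ha hb; rewrite fdE // /natdist.
apply/idP/idP; case: ifP => h1 /andP [h2 h3]; apply/andP; split; lia.
Qed.

Lemma floor_eq a b d : 0 < d -> a %/ d = b %/ d -> a < b + d.
Proof.
move=> hd h; rewrite (divn_eq a d) (divn_eq b d) h.
have := ltn_pmod a hd; lia.
Qed.

Lemma floor_neq a b d : 0 < d -> a + d <= b -> a %/ d < b %/ d.
Proof.
move=> hd h; have := leq_div2r d h.
by rewrite -{1}(mul1n d) addnC divnMDl.
Qed.

Ltac splitif :=
  repeat match goal with
  | |- context [if ?b then _ else _] =>
      lazymatch b with
      | context [if _ then _ else _] => fail
      | _ => let E := fresh "E" in case E: b
      end
  end.
Ltac crush := splitif; lia.

Lemma fd_scale M n cu cv pu pv : 0 < M -> cu < n -> cv < n -> cu != cv ->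
  0 < pu < M -> 0 < pv < M ->
  fdist (M*n) (M*cu+pu) (M*cv+pv) = M * fdist n cu cv + pv - pu.
Proof.
move=> hM hu hv hne hpu hpv.
have l1 : M * cu.+1 <= M * n by rewrite leq_mul2l hu orbT.
have l2 : M * cv.+1 <= M * n by rewrite leq_mul2l hv orbT.
rewrite !mulnS in l1 l2.
rewrite !fdE; try lia.
case: (ltngtP cu cv) => [h|h|h].
- have l3 : M * cu.+1 <= M * cv by rewrite leq_mul2l h orbT.
  rewrite mulnS in l3.
  have E : M * (cv - cu) = M * cv - M * cu by rewrite mulnBr.
  case: ifP => ?; lia.
- have l3 : M * cv.+1 <= M * cu by rewrite leq_mul2l h orbT.
  rewrite mulnS in l3.
  have E : M * (cv + n - cu) = M * cv + M * n - M * cu by rewrite mulnBr mulnDr.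
  case: ifP => ?; lia.
- by move: hne; rewrite h eqxx.
Qed.

Lemma arith_b M n d a pu pv : 0 < d -> 2*d < n -> 1 < M ->
  0 < pu < M -> 0 < pv < M ->
  d <= a <= n - d ->
  (a = d -> pu < pv) -> (a = n - d -> pv < pu) ->
  M*d+1 <= M * a + pv - pu <= M*n - (M*d+1).
Proof.
move=> hd hn hM hpu hpv ha H1 H2.
have e1 : M * (n - d) = M * n - M * d by rewrite mulnBr.
have e2 : M * (n - d - 1) = M * n - M * d - M by rewrite !mulnBr muln1.
have e3 : M * (d + 1) = M * d + M by rewrite mulnDr muln1.
have f1 : M * d <= M * a by rewrite leq_mul2l; lia.
have f2 : M * a <= M * (n - d) by rewrite leq_mul2l; lia.
have f3 : M * (d+1) <= M * (n - d) by rewrite leq_mul2l; lia.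
have f4 : M <= M * d by rewrite -{1}(muln1 M) leq_mul2l; lia.
have [h|h] : a = d \/ d < a by lia.
  have := H1 h; subst a; lia.
have [h'|h'] : a = n - d \/ a < n - d by lia.
  have := H2 h'; subst a; lia.
have g1 : M * (d+1) <= M * a by rewrite leq_mul2l; lia.
have g2 : M * a <= M * (n - d - 1) by rewrite leq_mul2l; lia.
lia.
Qed.

Lemma rat_contra M n d : 0 < d -> 0 < n -> 0 < M ->
  ~ (n%:Q / d%:Q <= (M*n)%N%:Q / (M*d+1)%N%:Q)%R.
Proof.
move=> hd hn hM.
rewrite ler_pdivrMr ?ltr0n ?addn1 // mulrAC ler_pdivlMr ?ltr0n //.
rewrite -!natrM ler_nat; nia.
Qed.

Definition validc (T : finType) (e : rel T) n d (c : T -> nat) :=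
  (forall v, c v < n) /\ (forall u v, e u v -> d <= fdist n (c u) (c v) <= n - d).

Definition arcb (T : finType) (e : rel T) n d (c : T -> nat) u v :=
  e u v && (c v == (c u + d) %% n).

Fixpoint walkb (T : finType) (e : rel T) n d (c : T -> nat) m v : bool :=
  if m is m'.+1 then [exists w, arcb e n d c v w && walkb e n d c m' w] else true.

Definition goodP (T : finType) (e : rel T) n d (c : T -> nat) v :=
  forall m, walkb e n d c m v.

Definition gb (T : finType) (e : rel T) n d (c : T -> nat) v : bool :=
  if excluded_middle_informative (goodP e n d c v) then true else false.

Lemma gbP (T : finType) (e : rel T) n d c v : reflect (goodP e n d c v) (gb e n d c v).
Proof. rewrite /gb; case: excluded_middle_informative => h; constructor => //. Qed.

Lemma walk_mono (T : finType) (e : rel T) n d c m v :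
  walkb e n d c m.+1 v -> walkb e n d c m v.
Proof.
elim: m v => [|m IH] v //= /existsP [w /andP [a hw]].
apply/existsP; exists w; rewrite a /=; exact: IH.
Qed.

Lemma walk_le (T : finType) (e : rel T) n d c m m' v :
  m' <= m -> walkb e n d c m v -> walkb e n d c m' v.
Proof.
elim: m => [|m IH]; first by rewrite leqn0 => /eqP ->.
rewrite leq_eqVlt => /orP [/eqP -> //|h] hw.
exact: IH (walk_mono hw).
Qed.

Lemma good_arc (T : finType) (e : rel T) n d c v w :
  arcb e n d c v w -> goodP e n d c w -> goodP e n d c v.
Proof.
move=> a g [|m] //=; apply/existsP; exists w; by rewrite a g.
Qed.

Lemma good_succ (T : finType) (e : rel T) n d c v :
  goodP e n d c v -> exists2 w, arcb e n d c v w & goodP e n d c w.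
Proof.
move=> hg; case: (classic (exists2 w, arcb e n d c v w & goodP e n d c w)) => // hn.
have: forall w, exists N, arcb e n d c v w -> ~~ walkb e n d c N w.
  move=> w; case: (classic (goodP e n d c w)) => hw.
    exists 0 => a; by case: hn; exists w.
  have [N hN] := not_all_ex_not _ _ hw.
  by exists N => _; apply/negP.
move=> /fin_all_exists [f hf].
have := hg (\max_w f w).+1 => /= /existsP [w /andP [a hw]].
have := hf w a; rewrite (walk_le (leq_bigmax w) hw) //.
Qed.

Lemma fd_arc n d cu cv : 0 < d -> d < n -> cu < n -> cv < n ->
  fdist n cu cv = d -> cv = (cu + d) %% n.
Proof. move=> h1 h2 h3 h4 H; rewrite fdE // in H; rewrite modE; last lia. move: H; repeat case: ifP => ?; lia. Qed.

Lemma fd_arc2 n d cu cv : 0 < d -> d < n -> cu < n -> cv < n ->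
  fdist n cu cv = n - d -> cu = (cv + d) %% n.
Proof. move=> h1 h2 h3 h4 H; rewrite fdE // in H; rewrite modE; last lia. move: H; repeat case: ifP => ?; lia. Qed.

Lemma none_good (T : finType) (e : rel T) n d c : 0 < d -> 2*d < n -> symmetric e ->
  validc e n d c ->
  (forall N D c', 0 < D -> 2*D <= N -> validc e N D c' -> (n%:Q/d%:Q <= N%:Q/D%:Q)%R) ->
  (forall v, ~ goodP e n d c v) -> False.
Proof.
move=> hd hn hsym [hc hv] Hmin hng.
have: forall v, exists N, ~~ walkb e n d c N v.
  move=> v; have [N hN] := not_all_ex_not _ _ (hng v); by exists N; apply/negP.
move=> /fin_all_exists [f hf].
pose B := \max_v f v.
have hB v : ~~ walkb e n d c B v.
  apply/negP => hw; have := hf v; by rewrite (walk_le (leq_bigmax v) hw).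
have hB0 (v : T) : 0 < B.
  case: (posnP B) => // E; by move: (hB v); rewrite E.
pose h v := \max_(i : 'I_B | walkb e n d c i v) (i : nat).
have hlt v : h v < B.
  apply: (@leq_ltn_trans B.-1); last by have := hB0 v; lia.
  apply/bigmax_leqP => i _; have := ltn_ord i; lia.
have harc u v : arcb e n d c u v -> h v < h u.
  move=> a.
  have cg : 0 < #|[pred i : 'I_B | walkb e n d c i v]|.
    apply/card_gt0P; by exists (Ordinal (hB0 v)).
  have [i0 hi0 E] := eq_bigmax_cond (fun i : 'I_B => (i : nat)) cg.
  have E' : h v = i0 by rewrite /h -E.
  rewrite E'.
  have hw : walkb e n d c i0.+1 u.
    rewrite /=; apply/existsP; exists v; rewrite a /=; by move: hi0; rewrite inE.
  have hi : i0.+1 < B.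
    rewrite ltnNge; apply/negP => hle; by move: (hB u); rewrite (walk_le hle hw).
  exact: (leq_bigmax_cond (P := fun i : 'I_B => walkb e n d c i u) (F := fun i : 'I_B => (i : nat)) (Ordinal hi) hw).
pose M := B.+2.
pose c2 v := M * c v + (B - h v).
have hval : validc e (M*n) (M*d+1) c2.
  split.
  - move=> v; rewrite /c2.
    have l : M * (c v).+1 <= M * n by rewrite leq_mul2l hc orbT.
    rewrite mulnS in l; have := hlt v; rewrite /M in l *; lia.
  - move=> u v huv; rewrite /c2.
    have [h1 h2] := (hc u, hc v).
    have hfd := hv u v huv.
    have ne : c u != c v.
      apply/eqP => E; move: hfd; rewrite E fdE // leqnn subnn; lia.
    have pu : 0 < B - h u < M by have := hlt u; rewrite /M; lia.
    have pv : 0 < B - h v < M by have := hlt v; rewrite /M; lia.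
    rewrite fd_scale //.
    apply: arith_b => //.
    + move=> E; have := harc u v; rewrite /arcb huv (fd_arc hd _ h1 h2 E) ?eqxx; last lia.
      move=> /(_ isT); lia.
    + move=> E; have := harc v u; rewrite /arcb (hsym v u) huv (fd_arc2 hd _ h1 h2 E) ?eqxx; last lia.
      move=> /(_ isT); lia.
have H := Hmin (M*n) (M*d+1) c2.
apply: (@rat_contra M n d hd); [lia|lia|].
apply: H => //; first lia.
have : M * (2*d + 1) <= M * n by rewrite leq_mul2l; lia.
rewrite mulnDr muln1 /M; nia.
Qed.

Lemma fd_shift n a b s : a < n -> b < n -> s < n ->
  fdist n ((a + s) %% n) ((b + s) %% n) = fdist n a b.
Proof.
move=> ha hb hs; rewrite !fdE ?ltn_mod; try lia.
rewrite !modE; try lia. crush.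
Qed.

Lemma fd_UG n d a b s : 0 < d -> a < n -> b < n -> d <= fdist n a b <= n - d ->
  s <= fdist n a b - d ->
  (d <= fdist n ((a + s) %% n) b <= n - d) /\ (d <= fdist n b ((a + s) %% n) <= n - d).
Proof.
move=> hd ha hb h1 h2.
have hf : fdist n a b < n by rewrite /fdist ltn_mod; lia.
have hs : s < n by lia.
move: h1 h2; rewrite !fdE ?ltn_mod; try lia.
rewrite !modE; try lia. crush.
Qed.

Lemma fd_arcU n d a b : 0 < d -> a < n -> b < n -> d <= fdist n a b <= n - d ->
  b = (((a + (fdist n a b - d)) %% n) + d) %% n.
Proof.
move=> hd ha hb; rewrite !fdE; try lia.
move=> h; rewrite (@modE (a + _) n); last crush.
rewrite modE; last crush.
move: h; crush.
Qed.

Lemma shift_step (T : finType) (e : rel T) n d c : 0 < d -> 2*d < n -> symmetric e ->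
  connected_graph e -> validc e n d c ->
  (exists v, goodP e n d c v) -> (exists v, ~ goodP e n d c v) ->
  exists c', validc e n d c' /\
    [set v | ~~ gb e n d c' v] \proper [set v | ~~ gb e n d c v].
Proof.
move=> hd hn hsym hconn [hc hv] [g hg] [b hb].
pose U := [set v | ~~ gb e n d c v].
have inU v : (v \in U) = ~~ gb e n d c v by rewrite inE.
have edge : exists u w, [&& e u w, u \in U & w \notin U].
  case: (classic (exists u w, [&& e u w, u \in U & w \notin U])) => // hne.
  have cl : closed e (mem U).
    move=> x y hxy; apply/idP/idP => hx; apply/negPn/negP => hy.
    - by apply: hne; exists x, y; rewrite hxy hx hy.
    - by apply: hne; exists y, x; rewrite hsym hxy hx hy.
  have := closed_connect cl (hconn g b).
  rewrite !inU; case: gbP => // _; case: gbP => //.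
have {edge} [u0 [w0 P0]] := edge.
pose P := fun p : T * T => [&& e p.1 p.2, p.1 \in U & p.2 \notin U].
pose F := fun p : T * T => fdist n (c p.1) (c p.2) - d.
have P0' : P (u0, w0) by [].
case: (arg_minnP F P0') => [[u1 w1] hp hmin].
pose s := F (u1, w1).
pose c' v := if v \in U then (c v + s) %% n else c v.
have n0 : 0 < n by lia.
have hP v w : P (v, w) -> d <= fdist n (c v) (c w) <= n - d /\ s <= fdist n (c v) (c w) - d.
  move=> hvw; split; first by apply: hv; case/and3P: hvw.
  exact: (hmin (v, w) hvw).
have hfs : fdist n (c u1) (c w1) < n by rewrite /fdist ltn_mod.
have hs : s < n by rewrite /s /F /=; lia.
have val' : validc e n d c'.
  split; first by move=> v; rewrite /c'; case: ifP => _ //; rewrite ltn_mod.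
  move=> u v huv; rewrite /c'.
  case: ifP => hu; case: ifP => hv'.
  - rewrite fd_shift //; exact: hv.
  - have /(hP u v) [h1 h2] : P (u, v) by rewrite /P /= huv hu hv'.
    by have [] := fd_UG hd (hc u) (hc v) h1 h2.
  - have /(hP v u) [h1 h2] : P (v, u) by rewrite /P /= hsym huv hu hv'.
    by have [] := fd_UG hd (hc v) (hc u) h1 h2.
  - exact: hv.
have good_keep m v : goodP e n d c v -> walkb e n d c' m v.
  elim: m v => [|m IH] v gv //=.
  have [w aw gw] := good_succ gv.
  apply/existsP; exists w; rewrite IH // andbT.
  have vU : v \notin U by rewrite inU; apply/negPn/gbP.
  have wU : w \notin U by rewrite inU; apply/negPn/gbP.
  by rewrite /arcb /c' (negbTE vU) (negbTE wU).
case/and3P: hp => /= e1 u1U w1U.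
have g1 : goodP e n d c w1 by move: w1U; rewrite inU negbK => /gbP.
have a1 : arcb e n d c' u1 w1.
  rewrite /arcb e1 /c' u1U (negbTE w1U) /=.
  have /(hP u1 w1) [h1 _] : P (u1, w1) by rewrite /P /= e1 u1U w1U.
  by rewrite /s /F /= -fd_arcU.
have gu1 : goodP e n d c' u1 by apply: (good_arc a1) => m; exact: good_keep.
exists c'; split => //.
apply/properP; split.
- apply/subsetP => v; rewrite !inE; apply: contra => /gbP gv.
  by apply/gbP => m; exact: good_keep.
- exists u1 => //; rewrite inE negbK; exact/gbP.
Qed.

Lemma stepA (T : finType) (e : rel T) n d : 0 < d -> 2*d < n -> symmetric e ->
  connected_graph e ->
  (forall N D c', 0 < D -> 2*D <= N -> validc e N D c' -> (n%:Q/d%:Q <= N%:Q/D%:Q)%R) ->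
  forall c, validc e n d c ->
  exists c', validc e n d c' /\ forall v, exists w, arcb e n d c' v w.
Proof.
move=> hd hn hsym hconn Hmin c hc.
have H : forall m c, #|[set v | ~~ gb e n d c v]| < m -> validc e n d c ->
  exists c', validc e n d c' /\ forall v, exists w, arcb e n d c' v w.
  elim=> [//|m IH] c0 hm hc0.
  case: (classic (exists v, ~ goodP e n d c0 v)) => [hb | hall].
  - case: (classic (exists v, goodP e n d c0 v)) => [hg|hng].
    + have [c' [hc' pr]] := shift_step hd hn hsym hconn hc0 hg hb.
      apply: (IH c') => //; have := proper_card pr; lia.
    + exfalso; apply: (none_good hd hn hsym hc0 Hmin) => v gv; apply: hng; by exists v.
  - exists c0; split => // v.
    have gv : goodP e n d c0 v by apply: NNPP => h; apply: hall; exists v.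
    have [w aw _] := good_succ gv; by exists w.
exact: (H _ c (ltnSn _) hc).
Qed.

Lemma natdist_S a b : natdist a.+1 b.+1 = natdist a b.
Proof. rewrite /natdist; lia. Qed.

Lemma div_dist a b g N' D' : 0 < g -> D' <= N' ->
  D' * g <= natdist a b <= N' * g - D' * g ->
  D' <= natdist (a %/ g) (b %/ g) <= N' - D'.
Proof.
move=> hg hND.
have key : forall x y, y <= x -> D' * g <= x - y <= N' * g - D' * g ->
   D' <= x %/ g - y %/ g <= N' - D'.
  move=> x y hxy h.
  have h1 : D' * g + y <= x by lia.
  have h2 : x <= (N' - D') * g + y by rewrite mulnBl; lia.
  have := leq_div2r g h1; have := leq_div2r g h2.
  rewrite !divnMDl //; lia.
rewrite /natdist; case: (leqP b a) => hab.
- have := key a b hab; have := leq_div2r g hab; lia.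
- have hab' : a <= b by lia.
  have := key b a hab'; have := leq_div2r g hab'; lia.
Qed.

Lemma reduce (T : finType) (e : rel T) N D c : 0 < D -> 2 * D <= N -> validc e N D c ->
  exists N' D' c', is_circ_coloring e N' D' c' /\ (N'%:Q / D'%:Q = N%:Q / D%:Q)%R.
Proof.
move=> hD hN [hc hv].
pose g := gcdn N D.
have hg : 0 < g by rewrite gcdn_gt0 hD orbT.
pose N' := N %/ g; pose D' := D %/ g.
have EN : N = N' * g by rewrite divnK // dvdn_gcdl.
have ED : D = D' * g by rewrite divnK // dvdn_gcdr.
have hD' : 0 < D' by move: hD; rewrite ED; case: (D') => //.
have hN' : 2 * D' <= N'.
  by rewrite -(leq_pmul2r hg) -mulnA -ED -EN.
have cop : coprime N' D'.
  have := muln_gcdl N' D' g; rewrite -EN -ED -/g.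
  by move=> E; rewrite /coprime -(eqn_pmul2r hg) mul1n E.
clearbody N' D'.
exists N', D', (fun v => (c v %/ g).+1); split.
- split => //.
  + move=> v; apply/andP; split => //.
    by rewrite ltn_divLR // -EN.
  + move=> u v huv; rewrite natdist_S; apply: div_dist => //; first lia.
    have := hv u v huv; rewrite -natdist_fd // -?ED -?EN //.
- rewrite EN ED -!pmulrn !natrM; field.
  rewrite !pnatr_eq0; apply/andP; split; lia.
Qed.

Lemma min_valid (T : finType) (e : rel T) q : circ_chromatic_number e q ->
  forall N D c, 0 < D -> 2*D <= N -> validc e N D c -> (q <= N%:Q/D%:Q)%R.
Proof.
move=> [_ H] N D c hD hN hv.
have [N' [D' [c' [hc' E]]]] := reduce hD hN hv.
rewrite -E; exact: H hc'.
Qed.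

Lemma init_col (T : finType) (e : rel T) n d : 0 < d -> coprime n d ->
  circ_chromatic_number e (n%:Q/d%:Q)%R -> exists c, validc e n d c.
Proof.
move=> hd cop [[n0 [d0 [c0 [[hd0 hn0 cop0 hr he] E]]]] _].
have E2 : n * d0 = n0 * d.
  move/eqP: E; rewrite eqr_div ?pnatr_eq0 -?lt0n // -!pmulrn -!natrM eqr_nat.
  by move/eqP.
have h1 : d %| d0.
  have : d %| n * d0 by rewrite E2 dvdn_mull.
  by rewrite Gauss_dvdr // coprime_sym.
have h2 : d0 %| d.
  have : d0 %| n0 * d by rewrite -E2 dvdn_mull.
  by rewrite Gauss_dvdr // coprime_sym.
have Ed : d0 = d by have := dvdn_leq hd h2; have := dvdn_leq hd0 h1; lia.
subst d0.
have En : n0 = n by apply/eqP; rewrite -(eqn_pmul2r hd) E2.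
subst n0.
exists (fun v => c0 v - 1); split.
- move=> v; have := hr v; lia.
- move=> u v huv.
  have := hr u; have := hr v => hv hu.
  rewrite -natdist_fd; try lia.
  have -> : natdist (c0 u - 1) (c0 v - 1) = natdist (c0 u) (c0 v) by rewrite /natdist; lia.
  exact: he.
Qed.

Lemma floors_inj n d k x j1 j2 : 0 < d -> 1 < k -> (k-1)*d < n -> n < k*d -> x < n ->
  j1 < j2 -> j2 < k ->
  (j2 - j1 <= k - 2 \/ x %% d < n - (k-1)*d) ->
  ((x + j1*d) %% n) %/ d != ((x + j2*d) %% n) %/ d.
Proof.
move=> hd hk h1 h2 hx hj hj2 hc.
have ek : k * d = (k-1)*d + d.
  have E : k = (k-1).+1 by lia.
  by rewrite {1}E mulSn addnC.
have ek2 : (k-1) * d = (k-2)*d + d.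
  have -> : k - 1 = (k - 2).+1 by lia.
  by rewrite mulSn addnC.
have f1 : j1 * d + d <= j2 * d by rewrite addnC -mulSn leq_mul2r; lia.
have f2 : j2 * d <= (k-1) * d by rewrite leq_mul2r; lia.
have f3 : j2 - j1 <= k - 2 -> j2 * d - j1 * d <= (k-2) * d.
  by move=> h; rewrite -mulnBl leq_mul2r h orbT.
have fx : x %/ d * d + x %% d = x by rewrite -divn_eq.
have fxm : x %% d < d by rewrite ltn_mod.
rewrite !modE; try lia.
apply/negP => /eqP E.
have hE1 := floor_eq hd E.
have hE2 := floor_eq hd (esym E).
move: E hE1 hE2.
case: ifP => w1; case: ifP => w2; try lia.
move=> E hE1 hE2.
case: hc => hc.
- have := f3 hc; lia.
- have [j10|j10] : j1 = 0 \/ 0 < j1 by lia.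
  + subst j1; rewrite mul0n addn0 in E w1 hE1 hE2.
    have hj2' : j2 = k - 1 \/ j2 < k - 1 by lia.
    case: hj2' => hj2'.
    * subst j2.
      have l1 := leq_trunc_div (x + (k - 1) * d - n) d.
      rewrite -E in l1; lia.
    * have : j2 - 0 <= k - 2 by lia.
      move/f3; lia.
  + have : j2 - j1 <= k - 2 by lia.
    move/f3; lia.
Qed.

Lemma col_shift (T : finType) (e : rel T) n d c K t : 0 < d -> 0 < n -> validc e n d c -> t < n ->
  n <= K * d -> is_coloring e K (fun v => ((c v + t) %% n) %/ d + 1).
Proof.
move=> hd n0 [hc hv] ht hK.
split.
- move=> v; rewrite addn1 /= ltn_divLR //.
  have : (c v + t) %% n < n by rewrite ltn_mod.
  lia.
- move=> u v huv.
  have := hv u v huv; rewrite -(fd_shift (s := t)) // -natdist_fd ?ltn_mod //.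
  rewrite /natdist => h.
  have [h1|h1] : (c u + t) %% n + d <= (c v + t) %% n \/ (c v + t) %% n + d <= (c u + t) %% n by lia.
  + have := floor_neq hd h1; lia.
  + have := floor_neq hd h1; lia.
Qed.

Definition succ (T : finType) (e : rel T) n d (c : T -> nat) (v : T) : T :=
  odflt v [pick w | arcb e n d c v w].

Lemma succP (T : finType) (e : rel T) n d c :
  (forall v, exists w, arcb e n d c v w) -> forall v, arcb e n d c v (succ e n d c v).
Proof.
move=> ht v; rewrite /succ; case: pickP => [w hw //|h].
have [w hw] := ht v; by rewrite h in hw.
Qed.

Lemma s_iter (T : finType) (e : rel T) n d c t v j :
  (forall v, exists w, arcb e n d c v w) ->
  (c (iter j (succ e n d c) v) + t) %% n = ((c v + t) %% n + j * d) %% n.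
Proof.
move=> ht; elim: j => [|j IH]; first by rewrite mul0n addn0 modn_mod.
rewrite iterS; have /andP [_ /eqP ->] := succP ht (iter j (succ e n d c) v).
rewrite modnDml addnAC -modnDml IH modnDml mulSn.
congr (_ %% _); lia.
Qed.

Lemma map_traject (T U : Type) (F : T -> U) g x m :
  map F (traject g x m) = map (fun j => F (iter j g x)) (iota 0 m).
Proof.
elim: m x => [//|m IH] x /=; rewrite IH; congr cons.
rewrite -[1]addn0 iotaDl -map_comp; apply: eq_map => j /=; by rewrite add0n -iterS iterSr.
Qed.

Lemma walk_ok (T : finType) (e : rel T) n d c (F : T -> nat) v m :
  (forall v, exists w, arcb e n d c v w) -> 0 < m ->
  uniq (map F (traject (succ e n d c) v m)) ->
  rainbow_path e F (traject (succ e n d c) v m) /\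
  size (traject (succ e n d c) v m) = m /\ begins_at v (traject (succ e n d c) v m).
Proof.
move=> ht; case: m => // m _ hu; split; last by rewrite size_traject; split => //; left.
split => //; split; last exact: map_uniq hu.
apply: (sub_path _ (fpath_traject (succ e n d c) v m)).
move=> x y /eqP <-; by have /andP [] := succP ht x.
Qed.

Lemma rainbow_walk (T : finType) (e : rel T) n d c k t v m :
  0 < d -> 1 < k -> (k-1)*d < n -> n < k*d -> validc e n d c ->
  (forall v, exists w, arcb e n d c v w) -> 0 < m -> m <= k ->
  (m < k \/ ((c v + t) %% n) %% d < n - (k-1)*d) ->
  exists p, rainbow_path e (fun v => ((c v + t) %% n) %/ d + 1) p /\ size p = m /\ begins_at v p.
Proof.
move=> hd hk h1 h2 hc ht hm hmk hcond.
exists (traject (succ e n d c) v m); apply: walk_ok => //.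
rewrite map_traject map_inj_in_uniq ?iota_uniq // => j1 j2.
rewrite !mem_iota !add0n => hj1 hj2 /= /eqP; rewrite eqn_add2r !s_iter // => E.
have hx : (c v + t) %% n < n by rewrite ltn_mod; lia.
case: (ltngtP j1 j2) => h //; exfalso.
- have hj2k : j2 < k by clear -hj2 hmk; lia.
  have hcd : j2 - j1 <= k - 2 \/ (c v + t) %% n %% d < n - (k - 1) * d.
    by case: hcond => hc'; [left; clear -hc' hj1 hj2 h; lia | by right].
  have := floors_inj hd hk h1 h2 hx h hj2k hcd; by rewrite (eqP E) eqxx.
- have hj2k : j1 < k by clear -hj1 hmk; lia.
  have hcd : j1 - j2 <= k - 2 \/ (c v + t) %% n %% d < n - (k - 1) * d.
    by case: hcond => hc'; [left; clear -hc' hj1 hj2 h; lia | by right].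
  have := floors_inj hd hk h1 h2 hx h hj2k hcd; by rewrite (eqP E) eqxx.
Qed.

Lemma addmod_back n x0 a : 0 < n -> x0 < n -> a < n -> (x0 + (a + n - x0) %% n) %% n = a.
Proof.
move=> n0 hx ha; rewrite modnDmr.
have -> : x0 + (a + n - x0) = a + n by lia.
by rewrite modnDr modn_small.
Qed.

Lemma count_one n d k x0 : 0 < d -> 0 < k -> (k-1)*d < n -> n <= k*d -> x0 < n ->
  k * (n - (k-1)*d) <= #|[set t : 'I_n | ((x0 + t) %% n) %% d < n - (k-1)*d]|.
Proof.
move=> hd hk h1 h2 hx.
have n0 : 0 < n by lia.
set r := n - (k-1)*d.
have ek : k * d = (k-1)*d + d.
  have E : k = (k-1).+1 by lia.
  by rewrite {1}E mulSn addnC.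
have hr : r <= d by rewrite /r; lia.
have hr0 : r = n - (k-1)*d by [].
clearbody r.
pose a (p : 'I_k * 'I_r) := p.1 * d + p.2.
have ha p : a p < n.
  have : p.1 * d <= (k-1) * d by rewrite leq_mul2r; have := ltn_ord p.1; lia.
  have := ltn_ord p.2; rewrite /a; lia.
pose g (p : 'I_k * 'I_r) : 'I_n := Ordinal (ltn_pmod (a p + n - x0) n0).
have hg p : (x0 + g p) %% n = a p by rewrite /= addmod_back.
have ginj : injective g.
  move=> [i o] [i' o'] E.
  have E2 : a (i, o) = a (i', o') by rewrite -hg E hg.
  rewrite /a /= in E2.
  have ho : o < d by have := ltn_ord o; lia.
  have ho' : o' < d by have := ltn_ord o'; lia.
  have Ei : (i * d + o) %/ d = (i' * d + o') %/ d by rewrite E2.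
  rewrite !divnMDl // !divn_small // !addn0 in Ei.
  have Eo : (i * d + o) %% d = (i' * d + o') %% d by rewrite E2.
  rewrite !modnMDl !modn_small // in Eo.
  by congr pair; apply: val_inj.
have := card_imset (mem setT) ginj.
rewrite cardsT card_prod !card_ord => <-.
apply: subset_leq_card; apply/subsetP => t /imsetP [p _ ->].
rewrite inE hg /a modnMDl modn_small; first exact: ltn_ord.
have := ltn_ord p.2.
by move=> hp; apply: leq_trans hp hr.
Qed.

Lemma exists_t (T : finType) n (P : 'I_n -> T -> bool) K : 0 < n ->
  (forall v, K <= #|[set t | P t v]|) ->
  exists t : 'I_n, #|T| * K <= n * #|[set v | P t v]|.
Proof.
move=> n0 hK.
pose F (t : 'I_n) := #|[set v | P t v]|.
have [tm _ hmax] := @arg_maxnP _ (Ordinal n0) xpredT F isT.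
exists tm.
have S1 : \sum_(t : 'I_n) F t = \sum_(v : T) #|[set t | P t v]|.
  rewrite /F.
  under eq_bigr => t _ do rewrite -sum1dep_card big_mkcond /=.
  rewrite exchange_big /=.
  apply: eq_bigr => v _; by rewrite -sum1dep_card big_mkcond.
have S2 : #|T| * K <= \sum_(v : T) #|[set t | P t v]|.
  rewrite -sum_nat_const; apply: leq_sum => v _; exact: hK.
have S3 : \sum_(t : 'I_n) F t <= n * F tm.
  have -> : n * F tm = \sum_(t : 'I_n) F tm by rewrite sum_nat_const card_ord.
  apply: leq_sum => t _; exact: hmax.
apply: (leq_trans S2); rewrite -S1; exact: S3.
Qed.

Lemma ratio_bound k n d T A : 0 < d -> 0 < k -> (k-1)*d < n ->
  T * (k * (n - (k-1)*d)) <= n * A ->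
  ((k%:Q * (n%:Q / d%:Q + 1 - k%:Q) / (n%:Q / d%:Q)) * T%:Q <= A%:Q)%R.
Proof.
move=> hd hk h1 h2.
have n0 : 0 < n by lia.
rewrite -!pmulrn.
have E : ((k%:R * (n%:R / d%:R + 1 - k%:R) / (n%:R / d%:R)) * T%:R : rat)%R
   = ((T * (k * (n - (k-1)*d)))%N%:R / n%:R)%R.
  rewrite natrM natrM natrB; last lia.
  rewrite natrM natrB; last lia.
  field.
  rewrite !pnatr_eq0; apply/andP; split; lia.
rewrite E ler_pdivrMr ?ltr0n // -natrM ler_nat; lia.
Qed.

Unset Implicit Arguments.

Theorem theorem2 (k n d : nat) (T : finType) (e : rel T) :
  0 < k -> 0 < n -> 0 < d -> 2 * d <= n -> coprime n d ->
  (n%:Q / d%:Q < k%:Q)%R ->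
  simple_graph e -> connected_graph e ->
  chromatic_number e k ->
  circ_chromatic_number e (n%:Q / d%:Q)%R ->
  exists f : T -> nat, is_coloring e k f /\
    exists A : {set T},
      (forall u, u \in A ->
         exists p, rainbow_path e f p /\ size p = k /\ begins_at u p) /\
      ((k%:Q * (n%:Q / d%:Q + 1 - k%:Q) / (n%:Q / d%:Q)) * #|T|%:Q
          <= #|A|%:Q)%R /\
      (forall v, v \notin A ->
         exists p, rainbow_path e f p /\ size p = k.-1 /\ begins_at v p).
Proof.
move=> hk hn hd h2d cop hlt [hsym hirr] hconn [_ hchimin] hcirc.
have hnkd : n < k * d.
  by move: hlt; rewrite -!pmulrn ltr_pdivrMr ?ltr0n // -natrM ltr_nat.
have [c0 hc0] := init_col hd cop hcirc.
have d2 : 1 < d.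
  case: (ltngtP d 1) => // hd1; first lia.
  subst d.
  have := @col_shift _ e n 1 c0 n 0 hd hn hc0 hn.
  rewrite muln1 => /(_ (leqnn n)) /hchimin; lia.
have h2d' : 2 * d < n.
  case: (ltngtP (2 * d) n) => // h; first lia.
  move: cop; rewrite -h /coprime gcdnC gcdnMl => /eqP; lia.
have Hmin := min_valid hcirc.
have [c [hc ht]] := stepA hd h2d' hsym hconn Hmin hc0.
have hk1 : (k - 1) * d < n.
  rewrite ltnNge; apply/negP => hle.
  have := @col_shift _ e n d c (k-1) 0 hd hn hc hn hle.
  move/hchimin; lia.
have hk2 : 1 < k.
  case: (ltnP 1 k) => // hk'.
  have : k * d <= 1 * d by rewrite leq_mul2r hk' orbT.
  lia.
pose P (t : 'I_n) v := ((c v + t) %% n) %% d < n - (k - 1) * d.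
have [t ht2] := @exists_t T n P (k * (n - (k - 1) * d)) hn
   (fun v => count_one hd hk hk1 (ltnW hnkd) (proj1 hc v)).
exists (fun v => ((c v + t) %% n) %/ d + 1); split.
  exact: col_shift hd hn hc (ltn_ord t) (ltnW hnkd).
exists [set v | P t v]; split; [|split].
- move=> u; rewrite inE => hu.
  apply: (@rainbow_walk _ e n d c k t u k) => //; by right.
- have := @ratio_bound k n d #|T| #|[set v | P t v]| hd hk hk1 ht2. exact.
- move=> v _; apply: (@rainbow_walk _ e n d c k t v k.-1) => //; try lia.
Qed.
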